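(* Let $V\subset\mathcal{A}_0$ be compact and let $V^T$ be complete. Then $$V^T=\bigcup_{0<r<1}P_r(V^T)=\bigcup_{0<r<1}P_r\big([P_r(V)]^T\big).$$
   Context: $D=\{z:|z|<1\}$, $\overline D$ its closure. $\mathcal{A}$ is the space of functions $f(z)=\sum_{k\ge0}a_k(f)z^k$ analytic in $D$, with the topology of locally uniform convergence; $\mathcal{A}_0=\{f\in\mathcal{A}: a_0(f)=1\}$. $\mathcal{A}(\overline D)$ is the set of functions analytic in some disk $\{|z|<R\}$ with $R>1$, and $\mathcal{A}_0(\overline D)=\{g\in\mathcal{A}(\overline D):a_0(g)=1\}$. The Hadamard product is $(f*g)(z)=\sum_{k\ge0}a_k(f)a_k(g)z^k$. For $V\subset\mathcal{A}_0$, $V^T=\{g\in\mathcal{A}_0(\overline D): (f*g)(1)\ne0 \ \forall f\in V\}$. For $x\in\overline D$, $(P_xf)(z)=f(xz)$ and $P_x(W)=\{P_xf:f\in W\}$; a set $W$ is complete if $P_xf\in W$ for all $f\in W$, $x\in\overline D$. *)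

(* Defs.v *)
From Stdlib Require Import Reals.
From Coquelicot Require Import Coquelicot.
Open Scope R_scope.

(* A power series is represented by its coefficient sequence a : nat -> C;
   the associated function is z |-> sum_k a k * z^k. *)
Definition pseries := nat -> C.

Definition in_A (a : pseries) : Prop :=
  forall z : C, Cmod z < 1 -> ex_series (fun k => (a k * z ^ k)%C).

Definition in_A0 (a : pseries) : Prop := in_A a /\ a 0%nat = RtoC 1.

(* g in A(closed D): analytic in some disk |z| < R with R > 1. *)
Definition in_AD (a : pseries) : Prop :=
  exists R, 1 < R /\ forall z : C, Cmod z < R -> ex_series (fun k => (a k * z ^ k)%C).

Definition in_A0D (a : pseries) : Prop := in_AD a /\ a 0%nat = RtoC 1.

Definition hadamard (a b : pseries) : pseries := fun k => (a k * b k)%C.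

Definition hadamard_at1_nonzero (a b : pseries) : Prop :=
  exists s : C, is_series (hadamard a b) s /\ s <> RtoC 0.

Definition transp (V : pseries -> Prop) : pseries -> Prop :=
  fun g => in_A0D g /\ forall f, V f -> hadamard_at1_nonzero f g.

(* (P_x f)(z) = f(xz): coefficients a_k x^k *)
Definition Pop (x : C) (a : pseries) : pseries := fun k => (a k * x ^ k)%C.

Definition Pset (x : C) (W : pseries -> Prop) : pseries -> Prop :=
  fun g => exists h, W h /\ g = Pop x h.

Definition complete (W : pseries -> Prop) : Prop :=
  forall g x, W g -> Cmod x <= 1 -> W (Pop x g).

Definition lu_conv (fn : nat -> pseries) (f : pseries) : Prop :=
  forall r, 0 <= r < 1 -> forall eps, 0 < eps ->
  exists N, forall n, (N <= n)%nat -> forall z : C, Cmod z <= r ->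
  forall u v, is_series (fun k => (fn n k * z ^ k)%C) u ->
              is_series (fun k => (f k * z ^ k)%C) v ->
              Cmod (u - v)%C <= eps.

(* compactness in A (metrizable topology of locally uniform convergence):
   every sequence in V has a subsequence converging to an element of V *)
Definition compact_A (V : pseries -> Prop) : Prop :=
  forall fn : nat -> pseries, (forall n, V (fn n)) ->
  exists (phi : nat -> nat) (f : pseries),
    (forall n, (phi n < phi (S n))%nat) /\ V f /\ lu_conv (fun n => fn (phi n)) f.

(* Main.v *)
Require Import Defs.
From Stdlib Require Import Reals Lra Lia Psatz.
From Coquelicot Require Import Coquelicot.
From Stdlib Require Import ClassicalEpsilon Classical FunctionalExtensionality.
Open Scope R_scope.

Lemma ser_bound (a : nat -> C) (b : nat -> R) s B :
  is_series a s -> is_series b B -> (forall n, Cmod (a n) <= b n) -> Cmod s <= B.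
Proof.
  intros Ha Hb Hab.
  assert (L1 : is_lim_seq (fun N => norm (sum_n a N)) (norm s)).
  { apply (filterlim_comp _ _ _ (sum_n a) norm eventually (locally s)). exact Ha. apply filterlim_norm. }
  assert (L2 : is_lim_seq (sum_n b) B) by exact Hb.

  assert (H0 : forall N, norm (sum_n a N) <= sum_n b N).
  { intro N. unfold sum_n. eapply Rle_trans. apply (norm_sum_n_m (K:=C_AbsRing) (V:=C_NormedModule)). apply sum_n_m_le. intro k.
    exact (Hab k). }
  assert (H := is_lim_seq_le _ _ (norm s) B H0 L1 L2). exact H.
Qed.

Lemma ser_bounded (a : nat -> C) : ex_series a -> exists M, forall n, Cmod (a n) <= M.
Proof.
  intros [s Hs].
  destruct (filterlim_bounded (sum_n a)) as [M HM].
  { exists s. exact Hs. }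
  exists (2 * M). intros [|n].
  - specialize (HM 0%nat). rewrite sum_O in HM. change (Cmod (a 0%nat) <= M) in HM.
    assert (0 <= Cmod (a 0%nat)) by apply Cmod_ge_0. lra.
  - assert (E : a (S n) = (sum_n a (S n) - sum_n a n)%C).
    { rewrite sum_Sn. set (u := sum_n a n). change (a (S n) = (u + a (S n) - u)%C). ring. }
    rewrite E. eapply Rle_trans. unfold Cminus. apply Cmod_triangle.
    rewrite Cmod_opp. specialize (HM (S n)) as H1. specialize (HM n).
    change (Cmod (sum_n a (S n)) <= M) in H1. change (Cmod (sum_n a n) <= M) in HM. lra.
Qed.

Lemma is_series_zero : is_series (fun _ : nat => (0:C)) (0:C).
Proof.
  unfold is_series. eapply filterlim_ext.
  - intro n. symmetry. unfold sum_n. apply (sum_n_m_const_zero (G:=C_AbelianMonoid)).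
  - apply filterlim_const.
Qed.

Definition E (t : R) : C := (cos t, sin t).

Lemma E_add a b : E (a + b) = (E a * E b)%C.
Proof.
  unfold E, Cmult; simpl. rewrite cos_plus, sin_plus. f_equal; ring.
Qed.

Lemma E_0 : E 0 = 1%C.
Proof. unfold E. rewrite cos_0, sin_0. reflexivity. Qed.

Lemma E_pow t n : (E t ^ n)%C = E (INR n * t).
Proof.
  induction n as [|n IH].
  - simpl. rewrite Rmult_0_l. now rewrite E_0.
  - change (E t ^ S n)%C with (E t * E t ^ n)%C. rewrite IH, <- E_add. f_equal. rewrite S_INR. ring.
Qed.

Lemma Cmod_E t : Cmod (E t) = 1.
Proof.
  unfold Cmod, E. rewrite <- sqrt_1. f_equal. simpl fst; simpl snd.
  pose proof (sin2_cos2 t). rewrite !Rsqr_pow2 in H. lra.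
Qed.

Lemma E_2PI n : E (2 * PI * INR n) = 1%C.
Proof.
  unfold E. replace (2 * PI * INR n) with (0 + 2 * INR n * PI) by ring.
  rewrite cos_period, sin_period, cos_0, sin_0. reflexivity.
Qed.

Lemma E_neg t : E (- t) = Cconj (E t).
Proof. unfold E, Cconj. simpl. rewrite cos_neg, sin_neg. reflexivity. Qed.

Lemma E_ne1 t : -(2*PI) < t < 2*PI -> t <> 0 -> E t <> 1%C.
Proof.
  intros Ht Ht0 HE. unfold E in HE. injection HE as Hc Hs.
  destruct (sin_eq_0_0 t Hs) as [m Hm].
  pose proof PI_RGT_0.
  assert (IZR m < 2).
  { destruct (Rlt_or_le (IZR m) 2) as [h|h]; auto. exfalso.
    assert (IZR m * PI >= 2 * PI) by nra. lra. }
  assert (IZR m > -2).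
  { destruct (Rlt_or_le (-2) (IZR m)) as [h|h]; auto. exfalso.
    assert (IZR m * PI <= -2 * PI) by nra. lra. }
  apply lt_IZR in H0. apply Rgt_lt, lt_IZR in H1.
  assert (m = 0 \/ m = 1 \/ m = -1)%Z as [-> | [-> | ->]] by lia.
  - apply Ht0. rewrite Hm. ring.
  - rewrite Hm in Hc. rewrite Rmult_1_l, cos_PI in Hc. lra.
  - rewrite Hm in Hc. replace (IZR (-1) * PI) with (- PI) in Hc by (simpl; ring).
    rewrite cos_neg, cos_PI in Hc. lra.
Qed.

Fixpoint csum (f : nat -> C) (n : nat) : C :=
  match n with 0 => 0%C | S n => (csum f n + f n)%C end.

Lemma csum_ext f g n : (forall j, f j = g j) -> csum f n = csum g n.
Proof. intros H; induction n; simpl; [reflexivity| rewrite IHn, H; reflexivity]. Qed.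

Lemma csum_mult_l a f n : csum (fun j => a * f j)%C n = (a * csum f n)%C.
Proof. induction n; simpl; [ring| rewrite IHn; ring]. Qed.

Lemma csum_const1 n : csum (fun _ => 1%C) n = RtoC (INR n).
Proof.
  induction n; simpl csum. reflexivity. rewrite IHn, S_INR.
  unfold RtoC, Cplus; simpl. f_equal; ring.
Qed.

Lemma csum_geom x n : ((x - 1) * csum (fun j => x ^ j) n = x ^ n - 1)%C.
Proof.
  induction n; simpl csum. simpl; ring.
  rewrite Cmult_plus_distr_l, IHn. simpl. ring.
Qed.

Lemma csum_bound f n : (forall j, Cmod (f j) <= 1) -> Cmod (csum f n) <= INR n.
Proof.
  intros H; induction n; simpl csum.
  - rewrite Cmod_0. simpl; lra.
  - rewrite S_INR. eapply Rle_trans. apply Cmod_triangle. specialize (H n). lra.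
Qed.

Lemma sum_n_zero_all (u : nat -> C) n :
  (forall l, (l <= n)%nat -> u l = 0%C) -> (sum_n u n : C) = 0%C.
Proof.
  induction n as [|n IH]; intros Hz.
  - rewrite sum_O. apply Hz; lia.
  - rewrite sum_Sn, IH by (intros; apply Hz; lia). rewrite (Hz (S n)) by lia.
    change (0+0 = 0)%C. ring.
Qed.

Lemma sum_n_single (u : nat -> C) k n :
  (k <= n)%nat -> (forall l, (l <= n)%nat -> l <> k -> u l = 0%C) -> sum_n u n = u k.
Proof.
  induction n as [|n IH]; intros Hk Hz.
  - assert (k = 0)%nat by lia. subst. apply sum_O.
  - rewrite sum_Sn. destruct (Nat.eq_dec k (S n)) as [->|Hne].
    + rewrite sum_n_zero_all by (intros; apply Hz; lia). change (0 + u (S n) = u (S n))%C. ring.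
    + rewrite IH by (try lia; intros; apply Hz; lia). rewrite (Hz (S n)) by lia.
      change (u k + 0 = u k)%C. ring.
Qed.
Lemma Csub_add (a b : C) : a = ((a - b) + b)%C.
Proof. ring. Qed.

Lemma CE_fixed (c : nat -> C) (rho rho' K eps : R) (k N : nat) :
  0 < rho -> rho < rho' ->
  (forall l, Cmod (c l) * rho'^l <= K) ->
  (forall z, Cmod z = rho -> exists s, is_series (fun l => (c l * z^l)%C) s /\ Cmod s <= eps) ->
  (k < N)%nat ->
  Cmod (c k) * rho^k <= eps + K * (rho/rho')^N / (1 - rho/rho').
Proof.
  intros Hr Hrr HK Hs HkN.
  set (q := rho/rho').
  assert (Hq0 : 0 < q) by (unfold q; apply Rdiv_lt_0_compat; lra).
  assert (Hq1 : q < 1) by (unfold q; apply (proj1 (Rdiv_lt_1 rho rho' ltac:(lra))); lra).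
  assert (HNpos : 0 < INR N) by (apply lt_0_INR; lia).
  set (th := 2 * PI / INR N).
  set (w := fun j : nat => E (- (INR j * INR k * th))).
  set (z := fun j : nat => (RtoC rho * E (INR j * th))%C).
  assert (Hz : forall j, Cmod (z j) = rho).
  { intro j. unfold z. rewrite Cmod_mult, Cmod_E, Cmod_R, Rabs_pos_eq; lra. }
  assert (C1 : forall M, exists S, is_series (fun l => csum (fun j => (w j * (c l * z j ^ l))%C) M) S /\ Cmod S <= INR M * eps).
  { induction M as [|M [S [HS HSb]]].
    - exists (RtoC 0). split. simpl. apply is_series_zero. rewrite Cmod_0. simpl. lra.
    - destruct (Hs (z M) (Hz M)) as [s [Hs1 Hs2]].
      exists (S + w M * s)%C. split.
      + pose proof (is_series_plus _ _ _ _ HS (is_series_scal_l (w M) _ _ Hs1)) as Hp.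
        refine (is_series_ext _ _ _ _ Hp). intro l. reflexivity.
      + rewrite S_INR. eapply Rle_trans. apply Cmod_triangle. rewrite Cmod_mult. unfold w. rewrite Cmod_E. lra. }
  set (u := fun l => csum (fun j => (w j * (c l * z j ^ l))%C) N).
  set (G := fun l : nat => csum (fun j => E ((INR l - INR k) * th) ^ j)%C N).
  assert (C2 : forall l, u l = (c l * RtoC (rho^l) * G l)%C).
  { intro l. unfold u, G. rewrite <- csum_mult_l. apply csum_ext. intro j. unfold w, z.
    rewrite Cpow_mult_l, E_pow, E_pow, <- RtoC_pow.
    replace (INR j * ((INR l - INR k) * th)) with (-(INR j*INR k*th) + INR l*(INR j*th)) by ring.
    rewrite E_add. ring. }
  assert (Gk : G k = RtoC (INR N)).
  { unfold G. rewrite <- csum_const1. apply csum_ext. intro j. rewrite E_pow.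
    replace (INR j * ((INR k - INR k) * th)) with 0 by ring. apply E_0. }
  assert (G0 : forall l, (l < N)%nat -> l <> k -> G l = 0%C).
  { intros l Hl Hlk. set (t := (INR l - INR k) * th).
    assert (Hl' : INR l < INR N) by (apply lt_INR; lia).
    assert (Hk' : INR k < INR N) by (apply lt_INR; lia).
    assert (Hl0 : 0 <= INR l) by apply pos_INR. assert (Hk0 : 0 <= INR k) by apply pos_INR.
    pose proof PI_RGT_0 as HPI.
    assert (Ht : t * INR N = 2 * PI * (INR l - INR k)) by (unfold t, th; field; lra).
    assert (Hne : E t <> 1%C).
    { apply E_ne1.
      - split; nra.
      - intro Ht0. rewrite Ht0 in Ht. assert (Hlk' : INR l = INR k) by nra. apply INR_eq in Hlk'. lia. }
    assert (HG : ((E t - 1) * G l = 0)%C).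
    { unfold G. fold t. rewrite csum_geom, E_pow.
      replace (INR N * t) with (2 * PI * INR l + - (2 * PI * INR k)) by lra.
      rewrite E_add, E_neg, !E_2PI. unfold Cconj. simpl. 
      replace (- 0) with 0 by ring. change (1, 0) with (RtoC 1). ring. }
    assert (Hne' : (E t - 1)%C <> 0%C).
    { intro H0. apply Hne. replace (E t) with ((E t - 1) + 1)%C by ring. rewrite H0. ring. }
    replace (G l) with (/ (E t - 1) * ((E t - 1) * G l))%C by (field; exact Hne').
    rewrite HG. ring. }
  destruct (C1 N) as [S [HS HSb]]. fold u in HS.
  set (T := (S - u k)%C).
  assert (Hsum : (sum_n u (pred N) : C) = u k).
  { apply sum_n_single. lia. intros l Hl Hlk. rewrite C2, G0 by lia. ring. }
  assert (HT : is_series (fun j => u (N + j)%nat) T).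
  { apply is_series_incr_n. lia.
    match goal with |- is_series _ ?x => replace x with S end. exact HS.
    change (S = T + sum_n u (pred N))%C. rewrite Hsum. unfold T.
    exact (Csub_add S (u k)). }
  assert (HTb : Cmod T <= INR N * K * q^N / (1 - q)).
  { apply (ser_bound (fun j => u (N + j)%nat) (fun j => (INR N * K * q^N) * q^j)).
    exact HT.
    replace (INR N * K * q ^ N / (1 - q)) with (scal (INR N * K * q^N) (/ (1 - q))).
    apply (is_series_scal_l (K:=R_AbsRing) (V:=R_NormedModule)). apply is_series_geom. rewrite Rabs_pos_eq; lra.
    unfold scal; simpl. unfold mult; simpl. field. lra.
    intro j. rewrite C2. rewrite !Cmod_mult, Cmod_R, Rabs_pos_eq by (apply pow_le; lra).
    assert (HGb : Cmod (G (N+j)%nat) <= INR N).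
    { unfold G. apply csum_bound. intro i. rewrite E_pow, Cmod_E. lra. }
    assert (Hc : Cmod (c (N+j)%nat) * rho ^ (N+j) <= K * q^(N+j)).
    { replace rho with (rho' * q) by (unfold q; field; lra).
      rewrite Rpow_mult_distr. specialize (HK (N+j)%nat). pose proof (pow_le q (N+j) ltac:(lra)). nra. }
    assert (0 <= Cmod (c (N + j)%nat) * rho ^ (N + j)) by (apply Rmult_le_pos; [apply Cmod_ge_0| apply pow_le; lra]).
    assert (0 <= Cmod (G (N+j)%nat)) by apply Cmod_ge_0.
    replace (INR N * K * q ^ N * q ^ j) with ((K * q^(N + j)) * INR N) by (rewrite pow_add; ring).
    apply Rmult_le_compat; lra. }
  assert (Huk : u k = (S - T)%C) by (unfold T; ring).
  rewrite C2, Gk in Huk.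
  assert (Hb : Cmod (c k * RtoC (rho ^ k) * RtoC (INR N)) <= INR N * eps + INR N * K * q ^ N / (1 - q)).
  { rewrite Huk. unfold Cminus. eapply Rle_trans. apply Cmod_triangle. rewrite Cmod_opp. lra. }
  rewrite !Cmod_mult, !Cmod_R, !Rabs_pos_eq in Hb by (try apply pow_le; lra).
  assert (E1 : INR N * K * q ^ N / (1 - q) = INR N * (K * q ^ N / (1 - q))) by (field; lra).
  rewrite E1 in Hb.
  apply Rmult_le_reg_r with (INR N). exact HNpos. lra.
Qed.

Lemma CE (c : nat -> C) (rho rho' K eps : R) :
  0 < rho -> rho < rho' ->
  (forall l, Cmod (c l) * rho'^l <= K) ->
  (forall z, Cmod z = rho -> exists s, is_series (fun l => (c l * z^l)%C) s /\ Cmod s <= eps) ->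
  forall k, Cmod (c k) * rho^k <= eps.
Proof.
  intros Hr Hrr HK Hs k.
  set (q := rho/rho').
  assert (Hq0 : 0 < q) by (unfold q; apply Rdiv_lt_0_compat; lra).
  assert (Hq1 : q < 1) by (unfold q; apply (proj1 (Rdiv_lt_1 rho rho' ltac:(lra))); lra).
  assert (HK0 : 0 <= K).
  { specialize (HK 0%nat). simpl in HK. pose proof (Cmod_ge_0 (c 0%nat)). lra. }
  destruct (Rle_or_lt (Cmod (c k) * rho^k) eps) as [h|h]; [exact h|exfalso].
  set (d := Cmod (c k) * rho^k - eps).
  destruct (pow_lt_1_zero q ltac:(rewrite Rabs_pos_eq; lra) (d * (1 - q) / (K + 1))) as [N0 HN0].
  { apply Rdiv_lt_0_compat; [apply Rmult_lt_0_compat|]; unfold d; lra. }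
  set (N := Nat.max N0 (S k)).
  specialize (HN0 N ltac:(unfold N; lia)).
  rewrite Rabs_pos_eq in HN0 by (apply pow_le; lra).
  pose proof (CE_fixed c rho rho' K eps k N Hr Hrr HK Hs ltac:(unfold N; lia)) as H.
  fold q in H.
  assert (K * q ^ N / (1 - q) < d).
  { apply Rmult_lt_reg_r with (1 - q). lra.
    replace (K * q ^ N / (1 - q) * (1 - q)) with (K * q^N) by (field; lra).
    assert (q ^ N * (K + 1) < d * (1 - q)).
    { apply Rmult_lt_reg_r with (/ (K+1)). apply Rinv_0_lt_compat; lra.
      replace (q ^ N * (K + 1) * / (K + 1)) with (q^N) by (field; lra). exact HN0. }
    pose proof (pow_le q N ltac:(lra)). nra. }
  unfold d in H0. lra.
Qed.

Lemma ex_series_dom (a : nat -> C) (A q : R) :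
  0 <= q < 1 -> (forall k, Cmod (a k) <= A * q^k) -> ex_series a.
Proof.
  intros Hq Hb.
  apply (ex_series_le (K:=C_AbsRing) (V:=C_CompleteNormedModule) a (fun k => A * q^k)).
  - intro n. exact (Hb n).
  - apply (ex_series_scal_l (K:=R_AbsRing) (V:=R_NormedModule) A (fun k => q^k)).
    apply ex_series_geom. rewrite Rabs_pos_eq; lra.
Qed.

Lemma sum_kq q n : sum_f_R0 (fun i => q^i * q^(n - i)) n = INR (S n) * q^n.
Proof.
  assert (H : forall m, (m <= n)%nat -> sum_f_R0 (fun i => q^i * q^(n - i)) m = INR (S m) * q^n).
  { induction m; intros Hm.
    - simpl. replace (n - 0)%nat with n by lia. ring.
    - rewrite tech5. cbv beta. rewrite IHm by lia. rewrite <- pow_add. replace (S m + (n - S m))%nat with n by lia.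
      rewrite (S_INR (S m)). ring. }
  apply H. lia.
Qed.

Lemma is_series_kq q : 0 <= q < 1 -> is_series (fun k => INR (S k) * q^k) (/(1-q) * /(1-q)).
Proof.
  intros Hq.
  assert (Hg : is_series (fun k => q^k) (/(1-q))) by (apply is_series_geom; rewrite Rabs_pos_eq; lra).
  assert (Ha : ex_series (fun k => Rabs (q^k))).
  { eapply ex_series_ext. intro n. symmetry. apply Rabs_pos_eq. apply pow_le; lra.
    apply ex_series_geom. rewrite Rabs_pos_eq; lra. }
  pose proof (is_series_mult _ _ _ _ Hg Hg Ha Ha) as H.
  eapply is_series_ext; [|exact H]. intro n. apply sum_kq.
Qed.

Lemma coef_bound (a : pseries) (r : R) : in_A a -> 0 <= r < 1 ->
  exists A, forall k, Cmod (a k) * r^k <= A.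
Proof.
  intros Ha Hr.
  destruct (ser_bounded _ (Ha (RtoC r) ltac:(rewrite Cmod_R, Rabs_pos_eq; lra))) as [M HM].
  exists M. intro k. specialize (HM k). rewrite Cmod_mult, Cmod_pow, Cmod_R, Rabs_pos_eq in HM by lra.
  exact HM.
Qed.

Lemma pow_sub1 t k : 1 <= t -> t^k - 1 <= (t - 1) * INR k * t^k.
Proof.
  intros Ht. induction k.
  - simpl. lra.
  - rewrite S_INR. simpl pow.
    assert (1 <= t^k) by (apply pow_R1_Rle; lra).
    assert (h1 : t * (t^k - 1) <= t * ((t - 1) * INR k * t^k)) by (apply Rmult_le_compat_l; lra).
    assert (h2 : 0 <= (t - 1) * (t * t^k - 1)) by (apply Rmult_le_pos; nra).
    nra.
Qed.

Lemma phi_ge (phi : nat -> nat) : (forall n, (phi n < phi (S n))%nat) -> forall n, (n <= phi n)%nat.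
Proof. intros H n. induction n. lia. specialize (H n). lia. Qed.

Lemma prod_real (x y rho sigma eps B t q : R) (k : nat) :
  0 <= x -> 0 <= y -> 0 < rho -> 0 < sigma -> 0 <= q ->
  x * rho^k <= eps -> y * sigma^k <= B ->
  0 <= t -> t <= q * (rho * sigma) ->
  x * y * t^k <= eps * B * q^k.
Proof.
  intros Hx Hy Hr Hs Hq H1 H2 Ht Htq.
  assert (Hrk : 0 < rho^k) by (apply pow_lt; lra).
  assert (Hsk : 0 < sigma^k) by (apply pow_lt; lra).
  assert (Hqk : 0 <= q^k) by (apply pow_le; lra).
  assert (Htk : t^k <= q^k * (rho^k * sigma^k)).
  { rewrite <- Rpow_mult_distr, <- Rpow_mult_distr. apply pow_incr. split; lra. }
  apply Rle_trans with (x * y * (q^k * (rho^k * sigma^k))).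
  apply Rmult_le_compat_l. apply Rmult_le_pos; lra. exact Htk.
  replace (x * y * (q ^ k * (rho ^ k * sigma ^ k))) with ((x * rho^k) * (y * sigma^k) * q^k) by ring.
  apply Rmult_le_compat_r. lra. apply Rmult_le_compat; try lra.
  apply Rmult_le_pos; lra. apply Rmult_le_pos; lra.
Qed.

Lemma term_real (x y a' rho sigma eps A B t q : R) (k : nat) :
  0 <= x -> 0 <= y -> 0 <= a' -> 0 < rho -> 0 < sigma -> 0 <= eps -> 0 <= A -> 0 <= q ->
  x * rho^k <= eps -> y * sigma^k <= B -> a' * rho^k <= A ->
  1 <= t -> t <= q * (rho * sigma) ->
  x * y * t^k + a' * y * (t^k - 1) <= B * (eps + A * (t - 1)) * (INR (S k) * q^k).
Proof.
  intros Hx Hy Ha Hr Hs He HA Hq H1 H2 H3 Ht Htq.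
  assert (Hrk : 0 < rho^k) by (apply pow_lt; lra).
  assert (Hsk : 0 < sigma^k) by (apply pow_lt; lra).
  assert (Hqk : 0 <= q^k) by (apply pow_le; lra).
  assert (Htk : t^k <= q^k * (rho^k * sigma^k)).
  { rewrite <- Rpow_mult_distr, <- Rpow_mult_distr. apply pow_incr. split; lra. }
  assert (Ht1 := pow_sub1 t k Ht).
  assert (Htk0 : 1 <= t^k) by (apply pow_R1_Rle; lra).
  assert (Hk : 0 <= INR k) by apply pos_INR.
  assert (HB : 0 <= B) by (assert (0 <= y * sigma^k) by (apply Rmult_le_pos; lra); lra).
  assert (P1 : x * y * t^k <= eps * B * q^k).
  { apply Rle_trans with (x * y * (q^k * (rho^k * sigma^k))).
    apply Rmult_le_compat_l. apply Rmult_le_pos; lra. exact Htk.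
    replace (x * y * (q ^ k * (rho ^ k * sigma ^ k))) with ((x * rho^k) * (y * sigma^k) * q^k) by ring.
    apply Rmult_le_compat_r. lra. apply Rmult_le_compat; try lra.
    apply Rmult_le_pos; lra. apply Rmult_le_pos; lra. }
  assert (P2 : a' * y * (t^k - 1) <= (t - 1) * INR k * (A * B * q^k)).
  { apply Rle_trans with (a' * y * ((t - 1) * INR k * t^k)).
    apply Rmult_le_compat_l. apply Rmult_le_pos; lra. exact Ht1.
    replace (a' * y * ((t - 1) * INR k * t ^ k)) with ((t - 1) * INR k * (a' * y * t^k)) by ring.
    apply Rmult_le_compat_l. apply Rmult_le_pos; lra.
    apply Rle_trans with (a' * y * (q^k * (rho^k * sigma^k))).
    apply Rmult_le_compat_l. apply Rmult_le_pos; lra. exact Htk.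
    replace (a' * y * (q ^ k * (rho ^ k * sigma ^ k))) with ((a' * rho^k) * (y * sigma^k) * q^k) by ring.
    apply Rmult_le_compat_r. lra. apply Rmult_le_compat; try lra.
    apply Rmult_le_pos; lra. apply Rmult_le_pos; lra. }
  rewrite S_INR.
  assert (0 <= (t - 1) * A * B * q^k) by (repeat apply Rmult_le_pos; lra).
  assert (0 <= eps * B * q^k * INR k) by (repeat apply Rmult_le_pos; lra).
  replace (B * (eps + A * (t - 1)) * ((INR k + 1) * q ^ k)) with
    (eps * B * q^k + (t - 1) * INR k * (A * B * q^k) + (t - 1) * A * B * q^k + eps * B * q^k * INR k) by ring.
  lra.
Qed.

Lemma Cmul_sub_distr (a b c : C) : (a * c + - (b * c))%C = ((a - b) * c)%C.
Proof. ring. Qed.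

Lemma Pop_in_A0D (g : pseries) (R t : R) :
  1 < R -> (forall z : C, Cmod z < R -> ex_series (fun k => (g k * z ^ k)%C)) -> g 0%nat = RtoC 1 ->
  0 < t < R -> in_A0D (Pop (RtoC t) g).
Proof.
  intros HR Hg Hg0 Ht. split.
  - exists (R / t). split.
    + apply Rlt_gt in HR. apply (Rmult_lt_reg_r t). lra. unfold Rdiv. rewrite Rmult_assoc, Rinv_l, Rmult_1_r; lra.
    + intros z Hz. apply (ex_series_ext (fun k => (g k * (RtoC t * z)^k)%C)); [|apply (Hg (RtoC t * z)%C)].
      * intro k. unfold Pop. rewrite Cpow_mult_l. exact (Cmult_assoc _ _ _).
      * rewrite Cmod_mult, Cmod_R, Rabs_pos_eq by lra.
        apply (Rmult_lt_reg_r (/t)). apply Rinv_0_lt_compat; lra.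
        replace (t * Cmod z * / t) with (Cmod z) by (field; lra). exact Hz.
  - unfold Pop. rewrite Hg0. simpl. ring.
Qed.

Lemma KEY (V : pseries -> Prop) (g : pseries) :
  (forall f, V f -> in_A0 f) -> compact_A V -> transp V g ->
  exists t, 1 < t /\ transp V (Pop (RtoC t) g).
Proof.
  intros HV Hc [[[R [HR HgR]] Hg0] Hnz].
  set (sigma := (1 + R) / 2).
  assert (Hs1 : 1 < sigma) by (unfold sigma; lra).
  assert (HsR : sigma < R) by (unfold sigma; lra).
  destruct (ser_bounded _ (HgR (RtoC sigma) ltac:(rewrite Cmod_R, Rabs_pos_eq; lra))) as [B HB].
  assert (HB' : forall k, Cmod (g k) * sigma^k <= B).
  { intro k. specialize (HB k). rewrite Cmod_mult, Cmod_pow, Cmod_R, Rabs_pos_eq in HB by lra. exact HB. }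
  assert (HB1 : 1 <= B).
  { specialize (HB' 0%nat). rewrite Hg0, Cmod_R, Rabs_pos_eq in HB' by lra. simpl in HB'. lra. }
  set (rho := (1 + / sigma) / 2).
  assert (Hsinv : 0 < / sigma < 1).
  { split. apply Rinv_0_lt_compat; lra. rewrite <- Rinv_1. apply Rinv_lt_contravar; lra. }
  assert (Hrho : 0 < rho < 1) by (unfold rho; lra).
  assert (Hrs : rho * sigma = (sigma + 1) / 2) by (unfold rho; field; lra).
  assert (Hrs1 : 1 < rho * sigma) by (rewrite Hrs; lra).
  set (rho' := (1 + rho) / 2).
  assert (Hrho' : rho < rho' < 1) by (unfold rho'; lra).
  set (t0 := (1 + rho * sigma) / 2).
  assert (Ht0 : 1 < t0 < rho * sigma) by (unfold t0; lra).
  set (q := t0 / (rho * sigma)).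
  assert (Hq : 0 < q < 1).
  { unfold q. split. apply Rdiv_lt_0_compat; lra. apply (proj1 (Rdiv_lt_1 t0 (rho * sigma) ltac:(lra))). lra. }
  assert (Htq : t0 = q * (rho * sigma)) by (unfold q; field; lra).
  assert (Hconv : forall f A t, (forall k, Cmod (f k) * rho^k <= A) -> 1 <= t <= t0 ->
             ex_series (hadamard f (Pop (RtoC t) g))).
  { intros f A t HA Ht. apply (ex_series_dom _ (A * B) q). lra.
    intro k. unfold hadamard, Pop. rewrite <- RtoC_pow.
    rewrite !Cmod_mult, Cmod_R, Rabs_pos_eq by (apply pow_le; lra).
    rewrite <- Rmult_assoc.
    apply (prod_real _ _ rho sigma); try lra; try apply Cmod_ge_0. apply HA. apply HB'. }
  destruct (classic (exists t, 1 < t /\ transp V (Pop (RtoC t) g))) as [Hex|Hnot]; [exact Hex|exfalso].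
  assert (Hsig : rho * sigma < sigma) by nra.
  set (tn := fun n : nat => 1 + (t0 - 1) / (INR n + 1)).
  assert (Htn : forall n, 1 < tn n <= t0).
  { intro n. unfold tn. assert (0 <= INR n) by apply pos_INR.
    split. assert (0 < (t0 - 1) / (INR n + 1)) by (apply Rdiv_lt_0_compat; lra). lra.
    assert ((t0 - 1) / (INR n + 1) <= t0 - 1).
    { unfold Rdiv. rewrite <- (Rmult_1_r (t0 - 1)) at 2. apply Rmult_le_compat_l. lra.
      rewrite <- Rinv_1. apply Rinv_le_contravar; lra. }
    lra. }
  assert (Hbad : forall n, exists f, V f /\ ~ hadamard_at1_nonzero f (Pop (RtoC (tn n)) g)).
  { intro n. apply NNPP. intro Hn. apply Hnot. exists (tn n). split. apply Htn.
    split. apply (Pop_in_A0D g R); auto. specialize (Htn n). lra.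
    intros f Hf. apply NNPP. intro Hf2. apply Hn. exists f. auto. }
  set (fn := fun n => proj1_sig (constructive_indefinite_description _ (Hbad n))).
  assert (Hfn : forall n, V (fn n) /\ ~ hadamard_at1_nonzero (fn n) (Pop (RtoC (tn n)) g)).
  { intro n. unfold fn. destruct (constructive_indefinite_description _ (Hbad n)) as [f Hf]. exact Hf. }
  destruct (Hc fn (fun n => proj1 (Hfn n))) as [phi [f [Hphi [Hf Hlu]]]].
  destruct (Hnz f Hf) as [Ssum [HS HS0]].
  assert (HSpos : 0 < Cmod Ssum) by (apply Cmod_gt_0; exact HS0).
  destruct (coef_bound f rho' (proj1 (HV f Hf)) ltac:(lra)) as [A HA'].
  assert (HA : forall k, Cmod (f k) * rho^k <= A).
  { intro k. eapply Rle_trans; [|apply (HA' k)]. apply Rmult_le_compat_l. apply Cmod_ge_0. apply pow_incr. lra. }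
  assert (HA0 : 0 <= A) by (specialize (HA 0%nat); pose proof (Cmod_ge_0 (f 0%nat)); simpl in HA; lra).
  set (W := / (1 - q) * / (1 - q)).
  assert (HW : is_series (fun k => INR (S k) * q^k) W) by (apply is_series_kq; lra).
  assert (HW0 : 0 < W) by (unfold W; assert (0 < /(1-q)) by (apply Rinv_0_lt_compat; lra); nra).
  set (eps := Cmod Ssum / (4 * B * W)).
  assert (Heps : 0 < eps) by (unfold eps; apply Rdiv_lt_0_compat; [lra| nra]).
  destruct (Hlu rho ltac:(lra) eps Heps) as [N1 HN1].
  set (delta := Cmod Ssum / (4 * (A + 1) * B * W)).
  assert (Hdelta : 0 < delta).
  { unfold delta; apply Rdiv_lt_0_compat. lra.
    apply Rmult_lt_0_compat; [|lra]. apply Rmult_lt_0_compat; lra. }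
  destruct (INR_unbounded ((t0 - 1) / delta)) as [N2 HN2].
  set (n := Nat.max N1 N2). set (m := phi n).
  assert (Hnm : (n <= m)%nat) by (apply phi_ge; exact Hphi).
  set (t := tn m).
  assert (Ht1 : t - 1 <= delta).
  { unfold t, tn.
    assert (INR N2 <= INR m) by (apply le_INR; unfold n in Hnm; lia).
    assert (Hd: (t0 - 1) <= delta * (INR m + 1)).
    { assert ((t0-1)/delta * delta = t0 - 1) by (field; lra). nra. }
    assert (0 <= INR m) by apply pos_INR.
    replace (1 + (t0 - 1) / (INR m + 1) - 1) with ((t0-1)/(INR m + 1)) by ring.
    apply (Rmult_le_reg_r (INR m + 1)). lra.
    replace ((t0 - 1) / (INR m + 1) * (INR m + 1)) with (t0-1) by (field; lra). lra. }
  assert (Htt : 1 < t <= t0) by apply Htn.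
  destruct (Hfn m) as [Hfm Hnzm].
  set (f1 := fn m).
  destruct (coef_bound f1 rho' (proj1 (HV f1 Hfm)) ltac:(lra)) as [A1 HA1].
  assert (HA1' : forall k, Cmod (f1 k) * rho^k <= A1).
  { intro k. eapply Rle_trans; [|apply (HA1 k)]. apply Rmult_le_compat_l. apply Cmod_ge_0. apply pow_incr. lra. }
  destruct (Hconv f1 A1 t HA1' ltac:(lra)) as [S1 HS1].
  assert (HS10 : S1 = RtoC 0).
  { apply NNPP. intro h. apply Hnzm. exists S1. split; auto. }
  set (d := fun k => (f1 k - f k)%C).
  assert (Hd : forall k, Cmod (d k) * rho^k <= eps).
  { apply (CE d rho rho' (A1 + A) eps). lra. lra.
    - intro l. unfold d. unfold Cminus. eapply Rle_trans. apply Rmult_le_compat_r. apply pow_le; lra.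
      apply Cmod_triangle. rewrite Cmod_opp.
      specialize (HA1 l); specialize (HA' l). rewrite Rmult_plus_distr_r. lra.
    - intros z Hz.
      destruct (proj1 (HV f1 Hfm) z ltac:(lra)) as [u Hu].
      destruct (proj1 (HV f Hf) z ltac:(lra)) as [v Hv].
      exists (u - v)%C. split.
      + pose proof (is_series_minus _ _ _ _ Hu Hv) as Hm.
        refine (is_series_ext _ _ _ _ Hm). intro l. unfold d. exact (Cmul_sub_distr _ _ _).
      + apply (HN1 n ltac:(unfold n; lia) z ltac:(lra) u v Hu Hv). }
  assert (Hdiff : is_series (fun k => (hadamard f1 (Pop (RtoC t) g) k - hadamard f g k)%C) (S1 - Ssum)%C).
  { pose proof (is_series_minus _ _ _ _ HS1 HS) as Hm.
    refine (is_series_ext _ _ _ _ Hm). intro l. reflexivity. }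
  assert (HWs : is_series (fun k => B * (eps + A * (t - 1)) * (INR (S k) * q^k)) (B * (eps + A * (t - 1)) * W)).
  { apply (is_series_scal_l (K:=R_AbsRing) (V:=R_NormedModule)). exact HW. }
  pose proof (ser_bound _ _ _ _ Hdiff HWs) as Hbd.
  assert (Hfin : Cmod Ssum <= B * (eps + A * (t - 1)) * W).
  { replace (Cmod Ssum) with (Cmod (S1 - Ssum)%C). apply Hbd.
    - intro k. unfold hadamard, Pop. rewrite <- RtoC_pow.
      replace (f1 k * (g k * RtoC (t ^ k)) - f k * g k)%C
        with (d k * g k * RtoC (t ^ k) + f k * g k * RtoC (t ^ k - 1))%C
        by (unfold d, RtoC, Cminus, Cplus, Copp, Cmult; simpl; f_equal; ring).
      eapply Rle_trans. apply Cmod_triangle.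
      assert (1 <= t^k) by (apply pow_R1_Rle; lra).
      rewrite !Cmod_mult, !Cmod_R, !Rabs_pos_eq by (try apply pow_le; lra).
      apply (term_real _ _ _ rho sigma); try lra; try apply Cmod_ge_0; auto.
    - rewrite HS10. replace (RtoC 0 - Ssum)%C with (- Ssum)%C by ring. apply Cmod_opp. }
  assert (E1 : B * eps * W = Cmod Ssum / 4) by (unfold eps; field; lra).
  assert (E2 : B * A * delta * W <= Cmod Ssum / 4).
  { unfold delta. replace (B * A * (Cmod Ssum / (4 * (A + 1) * B * W)) * W) with (Cmod Ssum / 4 * (A / (A + 1))) by (field; lra).
    assert (A / (A + 1) <= 1). { apply (Rmult_le_reg_r (A+1)). lra. replace (A / (A + 1) * (A + 1)) with A by (field; lra). lra. }
    assert (0 <= A / (A+1)) by (apply Rdiv_le_0_compat; lra). nra. }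
  assert (E3 : B * A * (t - 1) * W <= B * A * delta * W).
  { apply Rmult_le_compat_r. lra. apply Rmult_le_compat_l. apply Rmult_le_pos; lra. exact Ht1. }
  replace (B * (eps + A * (t - 1)) * W) with (B * eps * W + B * A * (t - 1) * W) in Hfin by ring.
  lra.
Qed.

Lemma had_Pop (f h : pseries) (x : C) (k : nat) : hadamard f (Pop x h) k = hadamard (Pop x f) h k.
Proof. unfold hadamard, Pop. ring. Qed.

Lemma Pop_inv (g : pseries) (t : R) : 0 < t -> g = Pop (RtoC (/ t)) (Pop (RtoC t) g).
Proof.
  intros Ht. apply functional_extensionality. intro k. unfold Pop.
  rewrite <- !RtoC_pow, <- Cmult_assoc, <- RtoC_mult, <- Rpow_mult_distr, Rinv_r, pow1 by lra.
  ring.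
Qed.

Theorem theorem4 (V : pseries -> Prop) :
  (forall f, V f -> in_A0 f) ->
  compact_A V ->
  complete (transp V) ->
  (forall g, transp V g <-> exists r, 0 < r < 1 /\ Pset (RtoC r) (transp V) g) /\
  (forall g, transp V g <->
     exists r, 0 < r < 1 /\ Pset (RtoC r) (transp (Pset (RtoC r) V)) g).
Proof.
  intros HV Hc Hcomp.
  assert (Hfwd : forall g, transp V g -> exists r, 0 < r < 1 /\ exists h, transp V h /\ g = Pop (RtoC r) h).
  { intros g Hg. destruct (KEY V g HV Hc Hg) as [t [Ht Hh]].
    exists (/ t). split. split. apply Rinv_0_lt_compat; lra. rewrite <- Rinv_1; apply Rinv_lt_contravar; lra.
    exists (Pop (RtoC t) g). split. exact Hh. apply Pop_inv. lra. }
  split.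
  - intro g. split.
    + intro Hg. destruct (Hfwd g Hg) as [r [Hr [h [Hh ->]]]]. exists r. split; auto. exists h; auto.
    + intros [r [Hr [h [Hh ->]]]]. apply Hcomp. exact Hh. rewrite Cmod_R, Rabs_pos_eq; lra.
  - intro g. split.
    + intro Hg. destruct (Hfwd g Hg) as [r [Hr [h [Hh Hgh]]]]. exists r. split; auto. exists h. split; auto.
      split. exact (proj1 Hh). intros f' [f [Hf ->]].
      destruct (proj2 Hg f Hf) as [s [Hs Hs0]]. exists s. split; auto.
      refine (is_series_ext _ _ _ _ Hs). intro k. rewrite Hgh. apply had_Pop.
    + intros [r [Hr [h [Hh ->]]]]. split.
      * destruct Hh as [[[R [HR HhR]] Hh0] _]. apply (Pop_in_A0D h R); auto. lra.
      * intros f Hf. destruct (proj2 Hh (Pop (RtoC r) f) (ex_intro _ f (conj Hf eq_refl))) as [s [Hs Hs0]].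
        exists s; split; auto.
        refine (is_series_ext _ _ _ _ Hs). intro k. symmetry. apply had_Pop.
Qed.
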